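(* Let $\mathcal T\in\Sigma^n$ be a text. The permutations $\pi,\bar\pi$ defined as $\pi(i)=\mathrm{IPA}[i]$ and $\bar\pi(i)=n-\mathrm{IPA}[i]+1$ for $i\in[n]$ are order-preserving for $\mathcal T$. Furthermore, $|\mathtt{st\text{-}colex}^-|\le\bar r$ and $|\mathtt{st\text{-}colex}^+|\le\bar r$.
   Context: A text is a string $\mathcal T\in\Sigma^n$ over an integer alphabet whose last symbol $\mathcal T[n]=\$$ occurs only there and is smallest. $\mathrm{IPA}[i]$ is the rank of the prefix $\mathcal T[1,i]$ among all prefixes of $\mathcal T$ in colexicographic order. A permutation $\pi:[n]\to[n]$ is order-preserving for $\mathcal T$ if for all $i,j\in[n-1]$, $\pi(i)<\pi(j)$ and $\mathcal T[i,i+1]=\mathcal T[j,j+1]$ imply $\pi(i+1)<\pi(j+1)$. For $i\ne j$, $\mathrm{rlce}(i,j)$ is the length of the longest common prefix of $\mathcal T[i,n]$ and $\mathcal T[j,n]$; $\mathrm{LPF}_\pi[i]=0$ if $\pi(i)=1$, else $\mathrm{LPF}_\pi[i]=\max_{\pi(j)<\pi(i)}\mathrm{rlce}(j,i)$; $\mathrm{PDA}_\pi$ is the set $\{i+\mathrm{LPF}_\pi[i]:i\in[n]\}$ sorted colexicographically by the prefixes $\mathcal T[1,j]$. $\mathtt{st\text{-}colex}^-=\mathrm{PDA}_\pi$ and $\mathtt{st\text{-}colex}^+=\mathrm{PDA}_{\bar\pi}$. $\bar r$ is the number of maximal equal-letter runs of $\mathrm{coBWT}(\mathcal T)$, obtained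 by sorting all rotations of $\mathcal T$ colexicographically and concatenating their first characters. *)

(* Defs.v *)
(* Indices are 0-based throughout: paper position i (1-based)
   is position i-1 here; paper rank r (1-based) is r-1 here. *)
From mathcomp Require Import all_boot.
Set Implicit Arguments. Unset Strict Implicit. Unset Printing Implicit Defensive.

Definition is_text (T : seq nat) : Prop :=
  0 < size T /\
  forall i, i < (size T).-1 -> nth 0 T (size T).-1 < nth 0 T i.

Fixpoint lex_lt (s t : seq nat) : bool :=
  match s, t with
  | [::], [::] => false
  | [::], _ :: _ => true
  | _ :: _, [::] => false
  | x :: s', y :: t' => (x < y) || ((x == y) && lex_lt s' t')
  end.

Definition colex_lt (s t : seq nat) : bool := lex_lt (rev s) (rev t).
Definition colex_le (s t : seq nat) : bool := ~~ colex_lt t s.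

Definition pref (T : seq nat) (i : nat) : seq nat := take i.+1 T.

Definition IPA (T : seq nat) (i : nat) : nat :=
  count (fun j => colex_lt (pref T j) (pref T i)) (iota 0 (size T)).

(* pi-bar(i) = n - IPA[i] + 1 in 1-based terms. *)
Definition IPAbar (T : seq nat) (i : nat) : nat := size T - (IPA T i).+1.

Definition is_perm_on (n : nat) (pi : nat -> nat) : Prop :=
  (forall i, i < n -> pi i < n) /\
  (forall i j, i < n -> j < n -> pi i = pi j -> i = j).

Definition order_preserving (T : seq nat) (pi : nat -> nat) : Prop :=
  forall i j, i < (size T).-1 -> j < (size T).-1 ->
    pi i < pi j -> nth 0 T i = nth 0 T j -> nth 0 T i.+1 = nth 0 T j.+1 ->
    pi i.+1 < pi j.+1.

Fixpoint lcp (s t : seq nat) : nat :=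
  match s, t with
  | x :: s', y :: t' => if x == y then (lcp s' t').+1 else 0
  | _, _ => 0
  end.

Definition rlce (T : seq nat) (i j : nat) : nat := lcp (drop i T) (drop j T).

Definition LPF (T : seq nat) (pi : nat -> nat) (i : nat) : nat :=
  if pi i == 0 then 0
  else \max_(j < size T | pi j < pi i) rlce T j i.

Definition PDA (T : seq nat) (pi : nat -> nat) : seq nat :=
  sort (fun a b => colex_le (pref T a) (pref T b))
       (undup [seq i + LPF T pi i | i <- iota 0 (size T)]).

Definition coBWT (T : seq nat) : seq nat :=
  [seq head 0 r | r <- sort colex_le [seq rot k T | k <- iota 0 (size T)]].

Fixpoint runs_from (x : nat) (s : seq nat) : nat :=
  match s with
  | [::] => 1
  | y :: s' => (if y == x then 0 else 1) + runs_from y s'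
  end.
Definition runs (s : seq nat) : nat :=
  match s with [::] => 0 | x :: s' => runs_from x s' end.

(* Main.v *)
Require Import Defs.
From mathcomp Require Import all_boot zify.
Set Implicit Arguments. Unset Strict Implicit. Unset Printing Implicit Defensive.

Lemma lex_irr s : lex_lt s s = false.
Proof. by elim: s => //= x s ->; rewrite ltnn eqxx. Qed.

Lemma lex_trans a b c : lex_lt a b -> lex_lt b c -> lex_lt a c.
Proof.
elim: a b c => [|x a IH] [|y b] [|z c] //=.
case/orP=> [xy|/andP[/eqP <- ab]]; case/orP=> [yz|/andP[/eqP <- bc]].
- by rewrite (ltn_trans xy yz).
- by rewrite xy.
- by rewrite yz.
- by rewrite (IH _ _ ab bc) eqxx orbT.
Qed.

Lemma lex_total a b : a <> b -> lex_lt a b || lex_lt b a.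
Proof.
elim: a b => [|x a IH] [|y b] //= H.
case: (ltngtP x y) => //= exy; subst y.
rewrite ?eqxx ?ltnn /=; apply: IH => E; apply: H; by rewrite E.
Qed.

Lemma lex_asym a b : lex_lt a b -> ~~ lex_lt b a.
Proof. move=> ab; apply/negP => ba; by have := lex_trans ab ba; rewrite lex_irr. Qed.

Lemma colex_irr s : colex_lt s s = false.
Proof. exact: lex_irr. Qed.
Lemma colex_trans a b c : colex_lt a b -> colex_lt b c -> colex_lt a c.
Proof. exact: lex_trans. Qed.
Lemma colex_total a b : a <> b -> colex_lt a b || colex_lt b a.
Proof. move=> H; apply: lex_total => E; apply: H; exact: (can_inj (@revK _)). Qed.
Lemma colex_asym a b : colex_lt a b -> ~~ colex_lt b a.
Proof. exact: lex_asym. Qed.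

Lemma colex_le_trans : transitive colex_le.
Proof.
move=> b a c; rewrite /colex_le => ab bc; apply/negP => ca.
case: (eqVneq a b) => [eab|nab].
  by subst; rewrite ca in bc.
case/orP: (colex_total (elimN eqP nab)) => H.
  by rewrite (colex_trans ca H) in bc.
by rewrite H in ab.
Qed.

Lemma colex_le_anti : antisymmetric colex_le.
Proof.
move=> a b; rewrite /colex_le => /andP[h1 h2]; apply/eqP; apply/negPn/negP => /eqP nab.
by case/orP: (colex_total nab) => H; [rewrite H in h2 | rewrite H in h1].
Qed.

Lemma colex_le_total : total colex_le.
Proof.
move=> a b; rewrite /colex_le; case: (eqVneq a b) => [->|nab]; first by rewrite colex_irr.
by case/orP: (colex_total (a:=a) (b:=b) (elimN eqP nab)) => H;
  [rewrite (negbTE (colex_asym H)) | rewrite (negbTE (colex_asym H)) orbT].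
Qed.

Lemma lcpP s t k :
  (k <= lcp s t) <-> (forall m, m < k -> m < size s /\ m < size t /\ nth 0 s m = nth 0 t m).
Proof.
elim: s t k => [|x s IH] [|y t] k /=.
- split; first by rewrite leqn0 => /eqP -> m.
  by case: k => // k /(_ 0 isT) [].
- split; first by rewrite leqn0 => /eqP -> m.
  by case: k => // k /(_ 0 isT) [].
- split; first by rewrite leqn0 => /eqP -> m.
  by case: k => // k /(_ 0 isT) [_ []].
- case: k => [|k]; first by split => // _ m.
  split.
  + case: eqP => // -> /IH H [|m] //= Hm.
    by case: (H m Hm) => A [B C].
  + move=> H; have [_ [_ /= ->]] := H 0 isT; rewrite eqxx ltnS.
    apply/IH => m Hm; by have [A [B C]] := H m.+1 Hm.
Qed.

Lemma lcp_mid a b c : lex_lt a b -> lex_lt b c -> lcp a c <= lcp a b /\ lcp a c <= lcp b c.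
Proof.
elim: a b c => [|x a IH] [|y b] [|z c] //=.
case/orP=> [xy|/andP[/eqP <- ab]]; case/orP=> [yz|/andP[/eqP <- bc]].
- by rewrite (ltn_eqF (ltn_trans xy yz)).
- by rewrite (ltn_eqF xy).
- by rewrite (ltn_eqF yz) eqxx.
- rewrite !eqxx; have [] := IH _ _ ab bc; by split.
Qed.

Lemma lex_cat A B X Y : lex_lt A B -> (forall z, B = A ++ z -> lex_lt X (z ++ Y)) ->
  lex_lt (A ++ X) (B ++ Y).
Proof.
elim: A B => [|x A IH] [|y B] //=.
- by move=> _ H; apply: (H (y :: B)).
- case/orP => [->//|/andP[/eqP <- AB]] H.
  rewrite ltnn eqxx /=; apply: IH => // z E; apply: H; by rewrite E.
Qed.

Lemma runs_from_count x s :
  runs_from x s = 1 + count (fun k => nth 0 (x :: s) k != nth 0 s k) (iota 0 (size s)).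
Proof.
elim: s x => [|y s IH] x //=.
rewrite IH /= (iotaDl 1 0) count_map eq_sym.
set C := count (preim _ _) _.
have -> : C = count (fun k : nat => nth 0 (y :: s) k != nth 0 s k) (iota 0 (size s)).
  by apply: eq_count => k /=; rewrite add0n.
by case: (x == y) => /=; lia.
Qed.

Lemma runs_starts s : 0 < size s ->
  count (fun k => (k == 0) || (nth 0 s k.-1 != nth 0 s k)) (iota 0 (size s)) = runs s.
Proof.
case: s => [//|x s] _; rewrite /runs runs_from_count /= (iotaDl 1 0) count_map.
congr (_ + _); apply: eq_count => k /=; by rewrite add1n.
Qed.

Lemma runs_ends s : 0 < size s ->
  count (fun k => (k == (size s).-1) || (nth 0 s k.+1 != nth 0 s k)) (iota 0 (size s)) = runs s.
Proof.
case: s => [//|x s] _; rewrite /runs runs_from_count.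
change (size (x :: s)) with (size s).+1.
rewrite -(addn1 (size s)) iotaD count_cat /= add0n addn1 /= eqxx /= addn0 addnC; congr (_ + _).
apply: eq_in_count => k; rewrite mem_iota /= => Hk.
by rewrite (ltn_eqF Hk) /= eq_sym.
Qed.

Section S.
Variable T : seq nat.
Hypothesis HT : is_text T.
Local Notation n := (size T).
Local Notation P i := (pref T i).
Local Notation t i := (nth 0 T i).

Lemma n_gt0 : 0 < n. Proof. by case: HT. Qed.

Lemma dollar_eq i : i < n -> t i = t n.-1 -> i = n.-1.
Proof.
move=> Hi E; case: HT => _ H; case: (ltngtP i n.-1) => // Hlt.
  by have := H _ Hlt; rewrite E ltnn.
lia.
Qed.

Lemma size_pref i : i < n -> size (P i) = i.+1.
Proof. move=> Hi; rewrite /pref size_take; case: ltnP => //; lia. Qed.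

Lemma pref_inj i j : i < n -> j < n -> P i = P j -> i = j.
Proof. move=> Hi Hj E; have := size_pref Hi; rewrite E size_pref //; by case. Qed.

Lemma rev_pref i : i < n -> rev (P i) = t i :: rev (take i T).
Proof. by move=> Hi; rewrite /pref (take_nth 0 Hi) rev_rcons. Qed.

Lemma rev_pref_nth i m : m <= i -> i < n -> nth 0 (rev (P i)) m = t (i - m).
Proof.
move=> Hm Hi; have Hs := size_pref Hi.
rewrite nth_rev ?Hs; last lia.
rewrite /pref nth_take subSS //; lia.
Qed.

Lemma pref_ext a b : a.+1 < n -> b.+1 < n -> t a.+1 = t b.+1 ->
  colex_lt (P a.+1) (P b.+1) = colex_lt (P a) (P b).
Proof.
move=> Ha Hb E; by rewrite /colex_lt (rev_pref Ha) (rev_pref Hb) E /= ltnn eqxx /=.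
Qed.

Lemma pref_ext_iter a b k : a + k < n -> b + k < n ->
  (forall m, 0 < m <= k -> t (a + m) = t (b + m)) ->
  colex_lt (P (a + k)) (P (b + k)) = colex_lt (P a) (P b).
Proof.
elim: k => [|k IH] Ha Hb H; first by rewrite !addn0.
rewrite !addnS pref_ext; first (apply: IH; try lia); try lia.
- move=> m Hm; apply: H; lia.
- rewrite -!addnS; apply: H; lia.
Qed.

Lemma pref_last_min i : i < n.-1 -> colex_lt (P n.-1) (P i).
Proof.
move=> Hi; have n0 := n_gt0; rewrite /colex_lt !rev_pref /=; try lia.
by case: HT => _ ->.
Qed.

Lemma pref0_lt i : 0 < i -> i < n -> t i = t 0 -> colex_lt (P 0) (P i).
Proof.
move=> H0 Hi E; rewrite /colex_lt (rev_pref Hi) (rev_pref (ltn_trans H0 Hi)) E take0 /= ltnn eqxx /=.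
have : size (rev (take i T)) = i by rewrite size_rev size_take Hi.
by case: (rev (take i T)) => //= Hs; rewrite -Hs in H0.
Qed.

Lemma IPA_lt a b : a < n -> b < n -> colex_lt (P a) (P b) -> IPA T a < IPA T b.
Proof.
move=> Ha Hb ab; rewrite /IPA.
set s := iota 0 n.
have H1 : count (predU (fun j => colex_lt (P j) (P a)) (pred1 a)) s <=
          count (fun j => colex_lt (P j) (P b)) s.
  apply: sub_count => j /orP [H|/eqP ->] //; exact: colex_trans H ab.
have H2 : count (predI (fun j => colex_lt (P j) (P a)) (pred1 a)) s = 0.
  rewrite (eq_count (a2 := pred0)) ?count_pred0 // => j /=.
  by case: (eqVneq j a) => [->|_]; rewrite ?colex_irr ?andbF.
have H3 : count (pred1 a) s = 1.
  by rewrite count_uniq_mem ?iota_uniq // mem_iota Ha.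
have := count_predUI (fun j => colex_lt (P j) (P a)) (pred1 a) s.
rewrite H2 H3 addn0 => E; rewrite E addn1 in H1; exact: H1.
Qed.

Lemma IPA_ltn a : a < n -> IPA T a < n.
Proof.
move=> Ha; rewrite /IPA.
have := count_predC (fun j => colex_lt (P j) (P a)) (iota 0 n).
rewrite size_iota => E.
have : 0 < count (predC (fun j => colex_lt (P j) (P a))) (iota 0 n).
  rewrite -has_count; apply/hasP; exists a; first by rewrite mem_iota Ha.
  by rewrite /= colex_irr.
lia.
Qed.

Lemma IPA_ltE a b : a < n -> b < n -> (IPA T a < IPA T b) = colex_lt (P a) (P b).
Proof.
move=> Ha Hb; apply/idP/idP; last exact: IPA_lt.
move=> H; case: (eqVneq a b) => [E|nab]; first by subst; rewrite ltnn in H.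
have : P a <> P b by move=> /(pref_inj Ha Hb) E; rewrite E eqxx in nab.
move/colex_total/orP => [//|ba].
by have := IPA_lt Hb Ha ba; lia.
Qed.

Lemma IPA_inj a b : a < n -> b < n -> IPA T a = IPA T b -> a = b.
Proof.
move=> Ha Hb E; case: (eqVneq a b) => // nab.
have : P a <> P b by move=> /(pref_inj Ha Hb) E'; rewrite E' eqxx in nab.
move/colex_total/orP => [ab|ba].
  by have := IPA_lt Ha Hb ab; lia.
by have := IPA_lt Hb Ha ba; lia.
Qed.

Lemma IPA_surj r : r < n -> exists2 p, p < n & IPA T p = r.
Proof.
move=> Hr.
have U : uniq [seq IPA T p | p <- iota 0 n].
  rewrite map_inj_in_uniq ?iota_uniq // => a b; rewrite !mem_iota /= => Ha Hb.
  exact: IPA_inj.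
have Sub : {subset [seq IPA T p | p <- iota 0 n] <= iota 0 n}.
  by move=> x /mapP [p]; rewrite !mem_iota /= => Hp ->; apply: IPA_ltn.
have Sz : size (iota 0 n) <= size [seq IPA T p | p <- iota 0 n] by rewrite size_map.
have [_ E] := uniq_min_size U Sub Sz.
have : r \in iota 0 n by rewrite mem_iota.
by rewrite -E => /mapP [p]; rewrite mem_iota /= => Hp ->; exists p.
Qed.

Lemma IPA_last : IPA T n.-1 = 0.
Proof.
have n0 := n_gt0.
case E: (IPA T n.-1) => [//|k].
have [p Hp Ep] : exists2 p, p < n & IPA T p = 0 by apply: IPA_surj.
have : IPA T p < IPA T n.-1 by rewrite E Ep.
rewrite IPA_ltE //; last lia.
case: (ltngtP p n.-1) => Hpn; try lia.
  by move=> H; have := colex_asym H; rewrite pref_last_min.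
by rewrite Hpn colex_irr.
Qed.

Definition pos r := find (fun p => IPA T p == r) (iota 0 n).
Definition nxt p := if p.+1 < n then t p.+1 else t 0.

Lemma pos_spec r : r < n -> pos r < n /\ IPA T (pos r) = r.
Proof.
move=> Hr; have [p Hp Ep] := IPA_surj Hr.
have Hh : has (fun p => IPA T p == r) (iota 0 n).
  by apply/hasP; exists p; rewrite ?mem_iota ?Ep ?eqxx.
have := nth_find 0 Hh; rewrite -/(pos r).
have := Hh; rewrite has_find size_iota -/(pos r) => Hl.
by rewrite nth_iota // add0n => /eqP.
Qed.

Lemma rot_colex a b : a < n -> b < n -> colex_lt (P a) (P b) ->
  colex_lt (rot a.+1 T) (rot b.+1 T).
Proof.
move=> Ha Hb ab; rewrite /colex_lt /rot !rev_cat.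
apply: lex_cat => // -[|w z] E.
  by move: ab; rewrite /colex_lt E cats0 lex_irr.
have Hsz : size (rev (P b)) = size (rev (P a)) + (size z).+1 by rewrite E size_cat.
rewrite !size_rev !size_pref // in Hsz.
have Hw : w = t (b - a.+1).
  have := rev_pref_nth (m := a.+1) (i := b); rewrite E nth_cat size_rev size_pref //.
  rewrite ltnn subnn /= => -> //; lia.
have Hx : size (rev (drop a.+1 T)) = n - a.+1 by rewrite size_rev size_drop.
case EX: (rev (drop a.+1 T)) Hx => [|x X] Hx; first by move: Hx => /=; lia.
have Hx0 : x = t n.-1.
  have := congr1 (nth 0 ^~ 0) EX; rewrite /= nth_rev ?size_drop; last lia.
  rewrite nth_drop => <-; congr nth; lia.
rewrite /= Hx0 Hw; case: HT => _ ->; first done. lia.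
Qed.

Lemma coBWT_spec :
  size (coBWT T) = n /\
  forall p, p < n -> nth 0 (coBWT T) (IPA T p) = nxt p.
Proof.
have n0 := n_gt0.
set L := [seq rot (pos r).+1 T | r <- iota 0 n].
have Lsorted : sorted colex_le L.
  apply/(sortedP [::]) => i; rewrite size_map size_iota => Hi.
  rewrite !(nth_map 0) ?size_iota; try lia.
  rewrite !nth_iota; try lia.
  have [A1 A2] := pos_spec (r := 0 + i) ltac:(lia).
  have [B1 B2] := pos_spec (r := 0 + i.+1) ltac:(lia).
  rewrite /colex_le; apply: colex_asym; apply: rot_colex => //.
  by rewrite -(IPA_ltE) // A2 B2.
have Pm : perm_eq [seq pos r | r <- iota 0 n] (iota 0 n).
  have U : uniq [seq pos r | r <- iota 0 n].
    rewrite map_inj_in_uniq ?iota_uniq // => a b; rewrite !mem_iota /= => Ha Hb E.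
    have [_ A2] := pos_spec Ha; have [_ B2] := pos_spec Hb.
    by rewrite -A2 -B2 E.
  have Sub : {subset [seq pos r | r <- iota 0 n] <= iota 0 n}.
    by move=> x /mapP [r]; rewrite !mem_iota /= => Hr ->; case: (pos_spec Hr).
  have Sz : size (iota 0 n) <= size [seq pos r | r <- iota 0 n] by rewrite size_map.
  have [_ E] := uniq_min_size U Sub Sz.
  by apply: uniq_perm => //; exact: iota_uniq.
have Pm2 : perm_eq L [seq rot k T | k <- iota 0 n].
  have -> : L = [seq rot k.+1 T | k <- [seq pos r | r <- iota 0 n]] by rewrite /L -map_comp.
  apply: perm_trans (perm_map (fun k => rot k.+1 T) Pm) _.
  have -> : [seq rot k.+1 T | k <- iota 0 n] = [seq rot k T | k <- iota 1 n].
    by rewrite (iotaDl 1 0) -map_comp.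
  case En: n n0 => [//|m] _.
  rewrite -{1}(addn1 m) iotaD map_cat /= add1n -En rot_size rot0.
  by rewrite perm_catC.
have Srt : sort colex_le [seq rot k T | k <- iota 0 n] = L.
  rewrite -(sorted_sort colex_le_trans Lsorted).
  apply/perm_sortP; [exact: colex_le_total|exact: colex_le_trans|exact: colex_le_anti|].
  by rewrite perm_sym.
split; first by rewrite /coBWT Srt !size_map size_iota.
move=> p Hp; rewrite /coBWT Srt -map_comp (nth_map 0) ?size_iota ?IPA_ltn //.
rewrite nth_iota ?IPA_ltn //= add0n.
have [A1 A2] := pos_spec (IPA_ltn Hp).
rewrite (IPA_inj A1 Hp A2) /nxt.
case: ltnP => Hpn.
  rewrite /rot; case ED: (drop p.+1 T) => [|y D].
    by move: (size_drop p.+1 T); rewrite ED /=; lia.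
  by rewrite /= -[y]/(nth 0 (y :: D) 0) -ED nth_drop addn0.
have -> : p.+1 = n by lia.
by rewrite rot_size.
Qed.

Lemma lcp_sym a b : lcp a b = lcp b a.
Proof. elim: a b => [|x a IH] [|y b] //=; rewrite eq_sym IH; by case: eqP. Qed.

Lemma rlce_lt j i m : m < rlce T j i -> j + m < n /\ i + m < n /\ t (j + m) = t (i + m).
Proof.
move=> Hm; have /lcpP H : m.+1 <= rlce T j i by [].
have [A [B C]] := H m (ltnSn m).
rewrite !size_drop !nth_drop in A B C; split; [lia|split; [lia|done]].
Qed.

Lemma rlce_ge j i k : (forall m, m < k -> j + m < n /\ i + m < n /\ t (j + m) = t (i + m)) ->
  k <= rlce T j i.
Proof.
move=> H; apply/lcpP => m Hm; have [A [B C]] := H m Hm.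
rewrite !size_drop !nth_drop; split; [lia|split; [lia|done]].
Qed.

Lemma LPF_ge (pi : nat -> nat) i j : j < n -> pi j < pi i -> rlce T j i <= LPF T pi i.
Proof.
move=> Hj Hpi; rewrite /LPF; case: eqP => [E|_]; first by rewrite E in Hpi.
exact: (leq_bigmax_cond (Ordinal Hj) (P := fun j : 'I_n => pi j < pi i)).
Qed.

Lemma LPF_wit (pi : nat -> nat) i : 0 < LPF T pi i ->
  exists2 j, j < n & pi j < pi i /\ rlce T j i = LPF T pi i.
Proof.
rewrite /LPF; case: eqP => // _.
case: (pickP (fun j : 'I_n => pi j < pi i)) => [j0 Pj0|N].
  rewrite (bigmax_eq_arg j0) //.
  case: (@arg_maxnP _ j0 (fun j : 'I_n => pi j < pi i) (fun j : 'I_n => rlce T j i) Pj0) => k Pk _.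
  by exists k.
by rewrite big_pred0.
Qed.

Lemma wit_shift j i L' : rlce T j i = L'.+1 ->
  [/\ j + L' < n, i + L' < n,
   colex_lt (P (j + L')) (P (i + L')) = colex_lt (P j) (P i),
   colex_lt (P (i + L')) (P (j + L')) = colex_lt (P i) (P j) &
   L'.+1 <= lcp (rev (P (j + L'))) (rev (P (i + L')))].
Proof.
move=> E.
have H m : m <= L' -> j + m < n /\ i + m < n /\ t (j + m) = t (i + m).
  by move=> Hm; apply: rlce_lt; rewrite E.
have [A [B _]] := H L' (leqnn _).
split => //.
- apply: pref_ext_iter => // m /andP[_ Hm]; by case: (H m Hm) => _ [].
- apply: pref_ext_iter => // m /andP[_ Hm]; by case: (H m Hm) => _ [].
- apply/lcpP => m Hm; rewrite !size_rev !size_pref //; split; first lia.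
  split; first lia.
  rewrite !rev_pref_nth //; try lia.
  have [_ [_ C]] := H (L' - m) ltac:(lia).
  have -> : j + L' - m = j + (L' - m) by lia.
  have -> : i + L' - m = i + (L' - m) by lia.
  done.
Qed.

Lemma lcp_pref q p L' : q < n -> p < n -> L'.+1 <= lcp (rev (P q)) (rev (P p)) ->
  L' <= q /\ L' <= p /\ forall m, m <= L' -> t (q - m) = t (p - m).
Proof.
move=> Hq Hp /lcpP H.
have [A [B _]] := H L' (ltnSn _); rewrite !size_rev !size_pref // in A B.
split; first lia. split; first lia.
move=> m Hm; have [_ [_ C]] := H m ltac:(lia).
by rewrite !rev_pref_nth in C; try lia.
Qed.

Lemma ext_core q p L' : q.+1 < n -> p.+1 < n -> L' <= q -> L' <= p ->
  (forall m, m <= L' -> t (q - m) = t (p - m)) -> t q.+1 = t p.+1 ->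
  [/\ colex_lt (P (q - L')) (P (p - L')) = colex_lt (P q) (P p),
      colex_lt (P (p - L')) (P (q - L')) = colex_lt (P p) (P q) &
      L'.+2 <= rlce T (q - L') (p - L')].
Proof.
move=> Hq Hp Lq Lp H E.
have H' m : 0 < m <= L' -> t (q - L' + m) = t (p - L' + m).
  move=> /andP[_ Hm]; have := H (L' - m) ltac:(lia).
  have -> : q - (L' - m) = q - L' + m by lia.
  by have -> : p - (L' - m) = p - L' + m by lia.
have Eq : q - L' + L' = q by lia.
have Ep : p - L' + L' = p by lia.
split.
- have := pref_ext_iter (a := q - L') (b := p - L') (k := L') ltac:(lia) ltac:(lia) H'.
  by rewrite Eq Ep.
- have := pref_ext_iter (a := p - L') (b := q - L') (k := L') ltac:(lia) ltac:(lia)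
    (fun m Hm => esym (H' m Hm)).
  by rewrite Eq Ep.
- apply: rlce_ge => m Hm; split; first lia. split; first lia.
  case: (ltngtP m L'.+1) => Hm'; try lia.
  + have := H (L' - m) ltac:(lia).
    have -> : q - (L' - m) = q - L' + m by lia.
    by have -> : p - (L' - m) = p - L' + m by lia.
  + subst m. have -> : q - L' + L'.+1 = q.+1 by lia.
    by have -> : p - L' + L'.+1 = p.+1 by lia.
Qed.

Lemma LPF_bound (pi : nat -> nat) i : i < n -> i + LPF T pi i <= n.-1.
Proof.
move=> Hi; case EL: (LPF T pi i) => [|L']; first by rewrite addn0; lia.
have [j Hj [Hpi Er]] := LPF_wit (ltac:(by rewrite EL) : 0 < LPF T pi i).
rewrite EL in Er.
have [A [B C]] := rlce_lt (j := j) (i := i) (m := L') ltac:(by rewrite Er).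
case: (ltngtP (i + L') n.-1) => H; try lia.
have := dollar_eq A; rewrite C H => /(_ erefl) E.
have Eji : j = i by lia.
by rewrite Eji ltnn in Hpi.
Qed.

Definition pm x := if x is k.+1 then k else n.-1.
Definition cb k := nth 0 (coBWT T) k.

Lemma pm_lt x : x <= n.-1 -> pm x < n.
Proof. have := n_gt0; case: x => /= [|x]; lia. Qed.

Lemma RS_IPA i : i < n ->
  (IPA T (pm (i + LPF T (IPA T) i)) == 0) ||
  (cb (IPA T (pm (i + LPF T (IPA T) i))).-1 != cb (IPA T (pm (i + LPF T (IPA T) i)))).
Proof.
move=> Hi; have n0 := n_gt0.
have Hb := LPF_bound (IPA T) Hi.
have [Csz Cn] := coBWT_spec.
set L := LPF T (IPA T) i in Hb *.
set p := pm (i + L).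
have pn : p < n by apply: pm_lt.
apply/orP; case: (posnP (IPA T p)) => [->|Hr]; first by left.
right; apply/negP => /eqP Ecb.
have [Q1 Q2] := pos_spec (r := (IPA T p).-1) ltac:(have := IPA_ltn pn; lia).
set q := pos (IPA T p).-1 in Q1 Q2.
have Enx : nxt q = nxt p by rewrite -Cn // -Cn // Q2.
have Hqp : colex_lt (P q) (P p) by rewrite -IPA_ltE // Q2; lia.
have LPFge := @LPF_ge (IPA T) i.
case EL: L => [|L'].
- have Hpe : p = pm i by rewrite /p EL addn0.
  case Ei: i => [|i'].
    by move: Hr; rewrite Hpe Ei /= IPA_last.
  have Hpi : p = i' by rewrite Hpe Ei.
  rewrite Hpi in Enx Hqp; have Hi' := Hi; rewrite Ei in Hi.
  have Ep : nxt i' = t i'.+1 by rewrite /nxt Hi.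
  rewrite Ep /nxt in Enx.
  case: ltnP Enx => Hq1 Enx.
    have Hlt : colex_lt (P q.+1) (P i'.+1) by rewrite pref_ext.
    have := LPFge q.+1 Hq1 ltac:(by rewrite Ei IPA_ltE).
    rewrite -/L EL; apply/negP; rewrite -ltnNge; apply: rlce_ge => m Hm.
    have -> : m = 0 by lia.
    rewrite !addn0 Ei; split => //.
  have Hlt : colex_lt (P 0) (P i'.+1) by apply: pref0_lt.
  have := LPFge 0 n0 ltac:(by rewrite Ei IPA_ltE).
  rewrite -/L EL; apply/negP; rewrite -ltnNge; apply: rlce_ge => m Hm.
  have -> : m = 0 by lia.
  rewrite !addn0 Ei; split => //.
- have [j Hj [Hji Er]] := @LPF_wit (IPA T) i ltac:(by rewrite -/L EL).
  rewrite -/L EL in Er.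
  have [A B C1 C2 Dl] := wit_shift Er.
  have Ep : p = i + L' by rewrite /p EL addnS.
  rewrite Ep in pn Hqp Enx.
  have Hjp : IPA T (j + L') < IPA T (i + L') by rewrite IPA_ltE // C1 -IPA_ltE.
  have Lqp : L'.+1 <= lcp (rev (P q)) (rev (P (i + L'))).
    case: (eqVneq q (j + L')) => [->|nq]; first done.
    have Hjq : IPA T (j + L') < IPA T q.
      have : IPA T (j + L') != IPA T q by apply/eqP => /IPA_inj E; rewrite E // eqxx in nq.
      have E2 : IPA T p = IPA T (i + L') by rewrite Ep.
      rewrite Q2; lia.
    rewrite IPA_ltE // in Hjq.
    have [_ H2] := lcp_mid Hjq Hqp; exact: leq_trans Dl H2.
  have [Lq [Lp Eqs]] := lcp_pref Q1 pn Lqp.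
  have Hq1 : q.+1 < n.
    case: (ltnP q.+1 n) => // Hq.
    have Eq : q = n.-1 by lia.
    have := Eqs 0 (leq0n _); rewrite !subn0 Eq => E.
    have := dollar_eq pn (esym E); lia.
  have Hp1 : (i + L').+1 < n by rewrite -addnS; lia.
  rewrite /nxt Hq1 Hp1 in Enx.
  have [X1 _ X3] := ext_core Hq1 Hp1 Lq Lp Eqs Enx.
  have Ei : i + L' - L' = i by lia.
  rewrite Ei Hqp in X1; rewrite Ei in X3.
  have := LPFge (q - L') ltac:(lia) ltac:(by rewrite IPA_ltE; lia).
  rewrite -/L EL; apply/negP; rewrite -ltnNge; exact: X3.
Qed.

Lemma IPAbar_lt a b : a < n -> b < n -> (IPAbar T a < IPAbar T b) = (IPA T b < IPA T a).
Proof.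
move=> Ha Hb; have := IPA_ltn Ha; have := IPA_ltn Hb; rewrite /IPAbar => A B.
apply/idP/idP; lia.
Qed.

Lemma RE_IPAbar i : i < n ->
  (IPA T (pm (i + LPF T (IPAbar T) i)) == n.-1) ||
  (cb (IPA T (pm (i + LPF T (IPAbar T) i))).+1 != cb (IPA T (pm (i + LPF T (IPAbar T) i)))).
Proof.
move=> Hi; have n0 := n_gt0.
have Hb := LPF_bound (IPAbar T) Hi.
have [Csz Cn] := coBWT_spec.
set L := LPF T (IPAbar T) i in Hb *.
set p := pm (i + L).
have pn : p < n by apply: pm_lt.
have Hrn := IPA_ltn pn.
apply/orP; case: (eqVneq (IPA T p) n.-1) => [->|Hr]; first by left.
right; apply/negP => /eqP Ecb.
have [Q1 Q2] := pos_spec (r := (IPA T p).+1) ltac:(lia).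
set q := pos (IPA T p).+1 in Q1 Q2.
have Enx : nxt q = nxt p by rewrite -Cn // -Cn // Q2.
have Hpq : colex_lt (P p) (P q) by rewrite -IPA_ltE // Q2.
have Hq1 : q.+1 < n.
  case: (ltnP q.+1 n) => // Hq.
  have Eq : q = n.-1 by lia.
  by move: Q2; rewrite Eq IPA_last.
rewrite {1}/nxt Hq1 in Enx.
have LPFge := @LPF_ge (IPAbar T) i.
case EL: L => [|L'].
- have Hpe : p = pm i by rewrite /p EL addn0.
  case Ei: i => [|i'].
    have Hpn : p = n.-1 by rewrite Hpe Ei.
    rewrite Hpn /nxt in Enx.
    have Hnn : (n.-1).+1 < n = false by lia.
    rewrite Hnn in Enx.
    have Hlt : colex_lt (P 0) (P q.+1) by apply: pref0_lt.
    have := LPFge q.+1 Hq1 ltac:(by rewrite Ei IPAbar_lt // IPA_ltE).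
    rewrite -/L EL; apply/negP; rewrite -ltnNge; apply: rlce_ge => m Hm.
    have -> : m = 0 by lia.
    rewrite !addn0 Ei; split => //.
  have Hpi : p = i' by rewrite Hpe Ei.
  rewrite Hpi in Enx Hpq; have Hi' := Hi; rewrite Ei in Hi.
  rewrite /nxt Hi in Enx.
  have Hlt : colex_lt (P i'.+1) (P q.+1) by rewrite pref_ext.
  have := LPFge q.+1 Hq1 ltac:(by rewrite Ei IPAbar_lt // IPA_ltE).
  rewrite -/L EL; apply/negP; rewrite -ltnNge; apply: rlce_ge => m Hm.
  have -> : m = 0 by lia.
  rewrite !addn0 Ei; split => //.
- have [j Hj [Hji Er]] := @LPF_wit (IPAbar T) i ltac:(by rewrite -/L EL).
  rewrite -/L EL in Er.
  rewrite IPAbar_lt // IPA_ltE // in Hji.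
  have [A B C1 C2 Dl] := wit_shift Er.
  have Ep : p = i + L' by rewrite /p EL addnS.
  rewrite Ep in pn Hpq Enx.
  have Hjp : IPA T (i + L') < IPA T (j + L') by rewrite IPA_ltE // C2.
  have Lpq : L'.+1 <= lcp (rev (P (i + L'))) (rev (P q)).
    case: (eqVneq q (j + L')) => [->|nq]; first by rewrite lcp_sym.
    have Hqj : IPA T q < IPA T (j + L').
      have : IPA T (j + L') != IPA T q by apply/eqP => /IPA_inj E; rewrite E // eqxx in nq.
      have E2 : IPA T p = IPA T (i + L') by rewrite Ep.
      rewrite Q2; lia.
    rewrite IPA_ltE // in Hqj.
    have [H1 _] := lcp_mid Hpq Hqj; rewrite lcp_sym in Dl; exact: leq_trans Dl H1.
  rewrite lcp_sym in Lpq.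
  have [Lq [Lp Eqs]] := lcp_pref Q1 pn Lpq.
  have Hp1 : (i + L').+1 < n by rewrite -addnS; lia.
  rewrite /nxt Hp1 in Enx.
  have [_ X2 X3] := ext_core Hq1 Hp1 Lq Lp Eqs Enx.
  have Ei : i + L' - L' = i by lia.
  rewrite Ei Hpq in X2; rewrite Ei in X3.
  have := LPFge (q - L') ltac:(lia) ltac:(by rewrite IPAbar_lt ?IPA_ltE //; lia).
  rewrite -/L EL; apply/negP; rewrite -ltnNge; exact: X3.
Qed.

Lemma count_bound (pi : nat -> nat) (Good : pred nat) :
  (forall i, i < n -> Good (IPA T (pm (i + LPF T pi i)))) ->
  size (PDA T pi) <= count Good (iota 0 n).
Proof.
move=> HG; rewrite /PDA size_sort.
set E := [seq i + LPF T pi i | i <- iota 0 n].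
have HE x : x \in E -> x <= n.-1.
  by case/mapP => i; rewrite mem_iota /= => Hi ->; apply: LPF_bound.
set g := fun x => IPA T (pm x).
have inj : {in undup E &, injective g}.
  move=> x y; rewrite !mem_undup => Hx Hy /IPA_inj E'.
  have := E' (pm_lt (HE _ Hx)) (pm_lt (HE _ Hy)).
  have := HE _ Hx; have := HE _ Hy; have := n_gt0.
  case: x {Hx E'} => [|x]; case: y {Hy} => [|y] /=; lia.
rewrite -(size_map g) -size_filter; apply: uniq_leq_size.
  by rewrite map_inj_in_uniq // undup_uniq.
move=> z /mapP [x]; rewrite mem_undup => Hx ->.
case/mapP: Hx => i; rewrite mem_iota /= => Hi ->.
rewrite mem_filter HG // mem_iota /=; apply: IPA_ltn; apply: pm_lt; exact: LPF_bound.
Qed.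

Lemma main_sec :
  (is_perm_on (size T) (IPA T) /\ order_preserving T (IPA T)) /\
  (is_perm_on (size T) (IPAbar T) /\ order_preserving T (IPAbar T)) /\
  (size (PDA T (IPA T)) <= runs (coBWT T) /\
   size (PDA T (IPAbar T)) <= runs (coBWT T)).
Proof.
have n0 := n_gt0.
have [Csz _] := coBWT_spec.
split; [split|split; [split|split]].
- split; [exact: IPA_ltn| exact: IPA_inj].
- move=> i j Hi Hj H E1 E2.
  rewrite IPA_ltE ?pref_ext -?IPA_ltE //; lia.
- split.
    move=> i Hi; rewrite /IPAbar; lia.
  move=> i j Hi Hj; rewrite /IPAbar => E.
  have := IPA_ltn Hi; have := IPA_ltn Hj => A B.
  apply: IPA_inj => //; lia.
- move=> i j Hi Hj H E1 E2.
  rewrite IPAbar_lt ?IPA_ltE ?pref_ext -?IPA_ltE -?IPAbar_lt //; lia.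
- apply: leq_trans (count_bound (Good := fun k => (k == 0) || (cb k.-1 != cb k)) _) _.
    exact: RS_IPA.
  by rewrite -runs_starts ?Csz.
- apply: leq_trans (count_bound (Good := fun k => (k == n.-1) || (cb k.+1 != cb k)) _) _.
    exact: RE_IPAbar.
  by rewrite -runs_ends ?Csz.
Qed.

End S.

Theorem lemma43 (T : seq nat) :
  is_text T ->
  (is_perm_on (size T) (IPA T) /\ order_preserving T (IPA T)) /\
  (is_perm_on (size T) (IPAbar T) /\ order_preserving T (IPAbar T)) /\
  (size (PDA T (IPA T)) <= runs (coBWT T) /\
   size (PDA T (IPAbar T)) <= runs (coBWT T)).
Proof. move=> HT; exact: (main_sec HT). Qed.
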